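(* Let $(X,d)$ be a complete metric space with (metric) uniform normal structure and property (P) for nets. Let $\mathcal S$ be a semigroup whose preorder $\le$ is total, and suppose the action $(\mathcal S,X)$ is strong-orbit $k$-Lipschitzian with $k<\tilde N(X)^{-1/2}$. If some orbit is bounded, then there is $z\in X$ such that $sz=z$ for all $s\in\mathcal S$.
   Context: A semigroup action is a map $\mathcal S\times X\to X$, $(s,x)\mapsto sx$, with $(st)x=s(tx)$. $\mathcal S^1$ is $\mathcal S$ with an identity adjoined. The preorder on $\mathcal S$: $s\le t$ iff $t\in\mathcal S^1s=\{s\}\cup\mathcal S s$; it is total if for all $s,t$, $s\le t$ or $t\le s$. The orbit of $x$ is $o(x)=\{x\}\cup\{sx:s\in\mathcal S\}$; $D(x,C)=\sup\{d(x,y):y\in C\}$. The action is strong-orbit $k$-Lipschitzian if $D(sx,o(sy))\le k\,D(x,o(y))$ for all $s\in\mathcal S$, $x,y\in X$. A set is admissible if it is a nonempty intersection of closed balls; ${\rm cov}(C)$ is the intersection of all closed balls containing $C$. $r(A)=\inf_{x\in A}D(x,A)$, $\delta(A)=\sup\{d(x,y):x,y\in A\}$; $\tilde N(X)=\sup\{r(A)/\delta(A)\}$ over admissible $A$ with $\delta(A)>0$, and $X$ has (metric) uniform normal structure if $\tilde N(X)<1$. Property (P) for nets: for any directed preordered index set and any two bounded nets $\{x_s\}$, $\{z_s\}$ in $X$ with $z_s\in{\rm cov}(\{x_j:j\ge s\})$, there is $z\in\bigcap_s{\rm cov}(\{z_j:j\ge s\})$ with $\limsup_s d(z,x_s)\le\limsup_t\limsup_s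 d(z_t,x_s)$. *)

(* Defs.v *)
From Stdlib Require Import Reals.
From Coquelicot Require Import Rbar Lub.
Open Scope R_scope.

Section Metric.
Context {X : Type} (d : X -> X -> R).

Record is_metric : Prop := {
  dist_ge0 : forall x y, 0 <= d x y;
  dist_eq0 : forall x y, d x y = 0 <-> x = y;
  dist_sym : forall x y, d x y = d y x;
  dist_tri : forall x y z, d x z <= d x y + d y z }.

Definition complete_metric : Prop :=
  forall u : nat -> X,
    (forall eps, 0 < eps -> exists N, forall m n, (N <= m)%nat -> (N <= n)%nat ->
        d (u m) (u n) < eps) ->
    exists x, forall eps, 0 < eps -> exists N, forall n, (N <= n)%nat -> d (u n) x < eps.

Definition bounded_set (C : X -> Prop) : Prop :=
  exists c r, forall y, C y -> d c y <= r.

Definition Dist (x : X) (C : X -> Prop) : Rbar :=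
  Lub_Rbar (fun t => exists y, C y /\ t = d x y).

Definition diam (A : X -> Prop) : Rbar :=
  Lub_Rbar (fun t => exists x y, A x /\ A y /\ t = d x y).

(* r(A) = inf_{x in A} D(x,A)  (for bounded A all D(x,A) are finite) *)
Definition cheb_radius (A : X -> Prop) : Rbar :=
  Glb_Rbar (fun t => exists x, A x /\ Dist x A = Finite t).

(* admissible: a nonempty intersection of (a family of) closed balls;
   a family of balls is a predicate on (center, radius) *)
Definition admissible (A : X -> Prop) : Prop :=
  (exists x, A x) /\
  exists Balls : X -> R -> Prop,
    forall x, A x <-> (forall c r, Balls c r -> d c x <= r).

Definition cov (C : X -> Prop) (x : X) : Prop :=
  forall c r, (forall y, C y -> d c y <= r) -> d c x <= r.

Definition Ntilde : Rbar :=
  Lub_Rbar (fun q => exists A, admissible A /\ bounded_set A /\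
     exists rA dA, cheb_radius A = Finite rA /\ diam A = Finite dA /\
       0 < dA /\ q = rA / dA).

Definition uniform_normal_structure : Prop := Rbar_lt Ntilde (Finite 1).

Definition net_limsup {I : Type} (le : I -> I -> Prop) (f : I -> R) : Rbar :=
  Glb_Rbar (fun t => exists s, Lub_Rbar (fun u => exists j, le s j /\ u = f j) = Finite t).

Definition bounded_net {I : Type} (x : I -> X) : Prop :=
  exists c r, forall s, d c (x s) <= r.

Definition property_P_nets : Prop :=
  forall (I : Type) (le : I -> I -> Prop),
    inhabited I ->
    (forall a, le a a) ->
    (forall a b c, le a b -> le b c -> le a c) ->
    (forall a b, exists c, le a c /\ le b c) ->
    forall x z : I -> X,
      bounded_net x -> bounded_net z ->
      (forall s, cov (fun y => exists j, le s j /\ y = x j) (z s)) ->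
      exists zz : X,
        (forall s, cov (fun y => exists j, le s j /\ y = z j) zz) /\
        Rbar_le (net_limsup le (fun s => d zz (x s)))
                (net_limsup le (fun t => real (net_limsup le (fun s => d (z t) (x s))))).

End Metric.

(* N^{-1/2} as an extended real; sup of the empty family (-oo) and 0 give +oo *)
Definition inv_sqrt_Rbar (N : Rbar) : Rbar :=
  match N with
  | Finite t => if Rlt_dec 0 t then Finite (/ sqrt t) else p_infty
  | p_infty => Finite 0
  | m_infty => p_infty
  end.

Section Action.
Context {S X : Type} (mul : S -> S -> S) (act : S -> X -> X).

Definition is_semigroup : Prop := forall a b c, mul (mul a b) c = mul a (mul b c).

Definition is_action : Prop := forall s t x, act (mul s t) x = act s (act t x).

Definition sg_le (s t : S) : Prop := t = s \/ exists u, t = mul u s.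

Definition sg_le_total : Prop := forall s t, sg_le s t \/ sg_le t s.

Definition orbit (x : X) (y : X) : Prop := y = x \/ exists s, y = act s x.

(* D(sx, o(sy)) <= k D(x, o(y)); read as vacuous when D(x,o(y)) = +oo *)
Definition strong_orbit_lipschitz (d : X -> X -> R) (k : R) : Prop :=
  forall s x y r, Rbar_le (Dist d x (orbit y)) (Finite r) ->
    Rbar_le (Dist d (act s x) (orbit (act s y))) (Finite (k * r)).

End Action.

(* Main.v *)
Require Import Defs.
From Stdlib Require Import Reals Lra Lia Classical ClassicalEpsilon IndefiniteDescription.
From Coquelicot Require Import Rbar Lub.
Open Scope R_scope.

Lemma lub_fin (E : R -> Prop) e M : E e -> (forall x, E x -> x <= M) ->
  exists l, Lub_Rbar E = Finite l /\ e <= l /\ l <= M /\ (forall x, E x -> x <= l).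
Proof.
  intros He HM.
  destruct (Lub_Rbar_correct E) as [Hub Hl].
  assert (H1: Rbar_le e (Lub_Rbar E)) by (apply Hub; auto).
  assert (H2: Rbar_le (Lub_Rbar E) M) by (apply Hl; intros x Hx; simpl; apply HM; auto).
  revert Hub H1 H2. generalize (Lub_Rbar E). intros L Hub H1 H2.
  destruct L as [l| |]; simpl in *; try contradiction.
  exists l; repeat split; auto.
Qed.

Lemma glb_le (E : R -> Prop) t : E t -> Rbar_le (Glb_Rbar E) t.
Proof. intros H. destruct (Glb_Rbar_correct E) as [Hlb _]. apply Hlb; auto. Qed.

Lemma glb_approx (E : R -> Prop) M eps : Rbar_le (Glb_Rbar E) (Finite M) -> 0 < eps ->
  exists t, E t /\ t < M + eps.
Proof.
  intros H He. destruct (classic (exists t, E t /\ t < M + eps)) as [?|Hn]; auto.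
  exfalso. destruct (Glb_Rbar_correct E) as [_ Hg].
  assert (Hlb : is_lb_Rbar E (M + eps)).
  { intros x Hx. simpl. apply Rnot_lt_le. intro Hlt. apply Hn. eauto. }
  specialize (Hg _ Hlb). pose proof (Rbar_le_trans _ _ _ Hg H). simpl in *. lra.
Qed.

Lemma nls_le {I : Type} (le : I -> I -> Prop) (f : I -> R) s0 M :
  le s0 s0 -> (forall j, le s0 j -> f j <= M) -> Rbar_le (net_limsup le f) (Finite M).
Proof.
  intros Hr HM.
  destruct (lub_fin (fun u => exists j, le s0 j /\ u = f j) (f s0) M) as [l [Hl [_ [HlM _]]]].
  { exists s0; auto. }
  { intros x [j [Hj ->]]. auto. }
  unfold net_limsup. apply Rbar_le_trans with (Finite l).
  - apply glb_le. exists s0; auto.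
  - simpl; auto.
Qed.

Lemma nls_approx {I : Type} (le : I -> I -> Prop) (f : I -> R) M eps :
  Rbar_le (net_limsup le f) (Finite M) -> 0 < eps -> exists s, forall j, le s j -> f j <= M + eps.
Proof.
  intros H He. destruct (glb_approx _ M eps H He) as [t [[s Hs] Ht]].
  exists s. intros j Hj.
  destruct (Lub_Rbar_correct (fun u => exists j, le s j /\ u = f j)) as [Hub _].
  assert (Hx : Rbar_le (f j) (Finite t)) by (rewrite <- Hs; apply Hub; eauto).
  simpl in Hx. lra.
Qed.

Lemma Dist_le {X} (d : X -> X -> R) x C r : (forall y, C y -> d x y <= r) -> Rbar_le (Dist d x C) (Finite r).
Proof.
  intros H. unfold Dist. destruct (Lub_Rbar_correct (fun t => exists y, C y /\ t = d x y)) as [_ Hl].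
  apply Hl. intros t [y [Hy ->]]. simpl. auto.
Qed.

Lemma Dist_ge {X} (d : X -> X -> R) x C r y : Rbar_le (Dist d x C) (Finite r) -> C y -> d x y <= r.
Proof.
  intros H Hy. unfold Dist in H. destruct (Lub_Rbar_correct (fun t => exists y, C y /\ t = d x y)) as [Hub _].
  assert (Hx : Rbar_le (d x y) (Finite r)) by (eapply Rbar_le_trans; [apply Hub; eauto | exact H]).
  exact Hx.
Qed.
Lemma cov_diam {X} (d : X -> X -> R) (C : X -> Prop) D u v :
  is_metric d -> (forall y y', C y -> C y' -> d y y' <= D) -> cov d C u -> cov d C v -> d u v <= D.
Proof.
  intros Hm HC Hu Hv. apply Hv. intros y Hy.
  rewrite (Defs.dist_sym d Hm). apply Hu. intros y' Hy'. apply HC; auto.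
Qed.

Lemma cov_of {X} (d : X -> X -> R) (C : X -> Prop) y : C y -> cov d C y.
Proof. intros Hy c r H. apply H; auto. Qed.

Lemma center {X} (d : X -> X -> R) N0 N' (A : X -> Prop) Dd :
  is_metric d -> Rbar_le (Ntilde d) (Finite N0) -> 0 <= N0 -> N0 < N' ->
  admissible d A -> bounded_set d A -> (forall x y, A x -> A y -> d x y <= Dd) ->
  exists z, A z /\ forall y, A y -> d z y <= N' * Dd.
Proof.
  intros Hm HN HN0 HN' Had Hbd HD.
  destruct Had as [[a Ha] Hballs].
  assert (Haa : d a a = 0) by (apply (Defs.dist_eq0 d Hm); auto).
  destruct (lub_fin (fun t => exists x y, A x /\ A y /\ t = d x y) (d a a) Dd)
    as [dA [HdA [HdA0 [HdAD HdAub]]]].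
  { exists a, a; auto. }
  { intros t [x [y [Hx [Hy ->]]]]. auto. }
  assert (Hpair : forall x y, A x -> A y -> d x y <= dA).
  { intros x y Hx Hy. apply HdAub. exists x, y; auto. }
  rewrite Haa in HdA0.
  destruct (Rle_lt_or_eq_dec 0 dA HdA0) as [Hpos | Hz].
  2:{ exists a; split; auto. intros y Hy. specialize (Hpair a y Ha Hy).
      assert (0 <= N' * Dd) by (apply Rmult_le_pos; lra). lra. }
  destruct (classic (exists z, A z /\ exists t, Dist d z A = Finite t /\ t < N' * dA)) as [Hex | Hn].
  - destruct Hex as [z [Hz [t [Ht Htl]]]]. exists z; split; auto. intros y Hy.
    assert (d z y <= t) by (apply (Dist_ge d z A t y); [rewrite Ht; simpl; lra | auto]).
    assert (N' * dA <= N' * Dd) by (apply Rmult_le_compat_l; lra). lra.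
  - exfalso.
    destruct (lub_fin (fun t => exists y, A y /\ t = d a y) (d a a) dA) as [ta [Hta _]].
    { exists a; auto. }
    { intros t [y [Hy ->]]. auto. }
    destruct (Glb_Rbar_correct (fun t => exists x, A x /\ Dist d x A = Finite t)) as [Hlb Hg].
    assert (H1 : Rbar_le (Finite (N' * dA)) (cheb_radius d A)).
    { apply Hg. intros t [x [Hx Ht]]. simpl. apply Rnot_lt_le. intro Hl. apply Hn. eauto. }
    assert (H2 : Rbar_le (cheb_radius d A) (Finite ta)).
    { apply Hlb. exists a; split; auto. }
    destruct (cheb_radius d A) as [rA| |] eqn:Hcr; simpl in H1, H2; try contradiction.
    assert (Hq : Rbar_le (Finite (rA / dA)) (Ntilde d)).
    { unfold Ntilde. destruct (Lub_Rbar_correct (fun q => exists A, admissible d A /\ bounded_set d A /\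
        exists rA dA, cheb_radius d A = Finite rA /\ diam d A = Finite dA /\ 0 < dA /\ q = rA / dA)) as [Hub _].
      apply Hub. exists A. split. { split; [exists a; auto | exact Hballs]. }
      split; [exact Hbd|].
      exists rA, dA. repeat split; auto. }
    pose proof (Rbar_le_trans _ _ _ Hq HN) as Hq'. simpl in Hq'.
    assert (N' <= rA / dA).
    { apply Rmult_le_reg_r with dA; auto. unfold Rdiv. rewrite Rmult_assoc, Rinv_l; lra. }
    lra.
Qed.

Lemma getN0 (N : Rbar) k : Rbar_lt N (Finite 1) -> Rbar_lt (Finite k) (inv_sqrt_Rbar N) -> 0 <= k ->
  exists N0, 0 <= N0 /\ Rbar_le N (Finite N0) /\ k * k * N0 < 1.
Proof.
  intros H1 H2 Hk. destruct N as [t| |]; simpl in *; try contradiction.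
  - destruct (Rlt_dec 0 t) as [Ht|Ht].
    + exists t. repeat split; try lra. simpl in H2.
      assert (Hs : 0 < sqrt t) by (apply sqrt_lt_R0; auto).
      assert (k * sqrt t < 1).
      { apply Rmult_lt_reg_r with (/ sqrt t). apply Rinv_0_lt_compat; auto.
        rewrite Rmult_assoc, Rinv_r, Rmult_1_l, Rmult_1_r; lra. }
      pose proof (sqrt_sqrt t (Rlt_le _ _ Ht)).
      assert (0 <= k * sqrt t) by (apply Rmult_le_pos; lra).
      replace (k * k * t) with ((k * sqrt t) * (k * sqrt t)) by (rewrite <- H0 at 3; ring).
      nra.
    + exists 0. split; [lra|]. split; [simpl; apply Rnot_lt_le; exact Ht| lra].
  - exists 0. repeat split; try lra.
Qed.
Lemma sg_refl {S} (mul : S -> S -> S) a : sg_le mul a a.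
Proof. left; auto. Qed.

Lemma sg_trans {S} (mul : S -> S -> S) a b c : is_semigroup mul ->
  sg_le mul a b -> sg_le mul b c -> sg_le mul a c.
Proof.
  intros Hs [->|[u ->]] [->|[v ->]].
  - left; auto.
  - right; exists v; auto.
  - right; exists u; auto.
  - right; exists (mul v u). rewrite Hs. auto.
Qed.

Lemma sg_dir {S} (mul : S -> S -> S) a b : sg_le_total mul -> exists c, sg_le mul a c /\ sg_le mul b c.
Proof.
  intros Ht. destruct (Ht a b) as [H|H].
  - exists b; split; auto. apply sg_refl.
  - exists a; split; auto. apply sg_refl.
Qed.

Lemma step {X S} (d : X -> X -> R) (mul : S -> S -> S) (act : S -> X -> X) k N0 N' (x : X) b :
 is_metric d -> property_P_nets d -> is_semigroup mul -> is_action mul act -> sg_le_total mul ->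
 strong_orbit_lipschitz act d k -> 0 <= k -> Rbar_le (Ntilde d) (Finite N0) -> 0 <= N0 -> N0 < N' ->
 inhabited S -> 0 <= b -> (forall t, d x (act t x) <= b) ->
 exists x', d x x' <= b /\ forall t, d x' (act t x') <= k * (N' * (k * b)).
Proof.
  intros Hm HP Hsg Hact Htot Hlip Hk HN HN0 HN' Hinh Hb Hx.
  assert (Hd0 : forall y, d y y = 0) by (intro y; apply (Defs.dist_eq0 d Hm); auto).
  assert (Dorb : Rbar_le (Dist d x (orbit act x)) (Finite b)).
  { apply Dist_le. intros y [->|[s ->]]; [rewrite Hd0; lra | auto]. }
  assert (Hpair : forall t t', d (act t x) (act t' x) <= k * b).
  { assert (Hw : forall t t', sg_le mul t t' -> d (act t x) (act t' x) <= k * b).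
    { intros t t' [->|[u ->]].
      - rewrite Hd0. apply Rmult_le_pos; lra.
      - apply (Dist_ge d (act t x) (orbit act (act t x))).
        + apply Hlip; auto.
        + right. exists u. apply Hact. }
    intros t t'. destruct (Htot t t') as [H|H]; auto.
    rewrite (Defs.dist_sym d Hm). auto. }
  set (tail := fun s y => exists j, sg_le mul s j /\ y = act j x).
  assert (Hz : forall s, exists z, cov d (tail s) z /\ forall y, cov d (tail s) y -> d z y <= N' * (k * b)).
  { intros s. apply (center d N0 N'); auto.
    - split. exists (act s x). apply cov_of. exists s; split; auto; apply sg_refl.
      exists (fun c r => forall y, tail s y -> d c y <= r). intros y; split; auto.
    - exists x, b. intros y Hy. apply Hy. intros y' [j [_ ->]]. auto.
    - intros y y' Hy Hy'. apply (cov_diam d (tail s)); auto.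
      intros u v [j [_ ->]] [j' [_ ->]]. auto. }
  set (zf := fun s => proj1_sig (constructive_indefinite_description _ (Hz s))).
  assert (Hzf : forall s, cov d (tail s) (zf s) /\ forall y, cov d (tail s) y -> d (zf s) y <= N' * (k * b)).
  { intro s. exact (proj2_sig (constructive_indefinite_description _ (Hz s))). }
  assert (HM : 0 <= N' * (k * b)).
  { apply Rmult_le_pos; [lra| apply Rmult_le_pos; lra]. }
  destruct (HP S (sg_le mul) Hinh (sg_refl mul) (fun a b c => sg_trans mul a b c Hsg)
             (fun a b => sg_dir mul a b Htot) (fun s => act s x) zf) as [zz [Hcov Hlim]].
  - exists x, b. auto.
  - exists x, b. intros s. apply (proj1 (Hzf s)). intros y [j [_ ->]]. auto.
  - intros s. exact (proj1 (Hzf s)).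
  - destruct Hinh as [s0].
    assert (Hr : Rbar_le (net_limsup (sg_le mul)
               (fun t => real (net_limsup (sg_le mul) (fun s => d (zf t) (act s x))))) (Finite (N' * (k * b)))).
    { apply nls_le with s0. apply sg_refl.
      intros t _.
      assert (Hi : Rbar_le (net_limsup (sg_le mul) (fun s => d (zf t) (act s x))) (Finite (N' * (k * b)))).
      { apply nls_le with t. apply sg_refl. intros j Hj. apply (proj2 (Hzf t)).
        apply cov_of. exists j; auto. }
      revert Hi. generalize (net_limsup (sg_le mul) (fun s => d (zf t) (act s x))).
      intros [v| |] Hi; simpl in *; try contradiction; lra. }
    pose proof (Rbar_le_trans _ _ _ Hlim Hr) as Hl.
    exists zz. split.
    + apply (Hcov s0). intros y [j [_ ->]]. apply (proj1 (Hzf j)). intros y [i [_ ->]]. auto.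
    + intros t.
      assert (Heps : forall eps, 0 < eps -> d zz (act t zz) <= k * (N' * (k * b) + eps)).
      { intros eps He.
        destruct (nls_approx _ _ _ eps Hl He) as [s' Hs'].
        assert (HD : Rbar_le (Dist d zz (orbit act (act s' x))) (Finite (N' * (k * b) + eps))).
        { apply Dist_le. intros y [->|[u ->]].
          - apply Hs'. apply sg_refl.
          - rewrite <- Hact. apply Hs'. right. exists u. auto. }
        pose proof (Hlip t zz (act s' x) _ HD) as HD2.
        rewrite (Defs.dist_sym d Hm).
        apply (Hcov (mul t s')). intros y [j [Hj ->]].
        apply (proj1 (Hzf j)). intros y [i [Hi ->]].
        apply (Dist_ge d _ _ _ _ HD2).
        destruct (sg_trans mul _ _ _ Hsg Hj Hi) as [->|[u ->]].
        - left. apply Hact.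
        - right. exists u. rewrite !Hact. auto. }
      apply Rnot_lt_le. intro Hlt.
      set (a := d zz (act t zz)) in *.
      set (eps := (a - k * (N' * (k * b))) / (2 * (k + 1))).
      assert (Hep : 0 < eps) by (unfold eps; apply Rdiv_lt_0_compat; lra).
      specialize (Heps eps Hep).
      assert (k * eps < a - k * (N' * (k * b))).
      { unfold eps. apply Rle_lt_trans with ((a - k * (N' * (k * b))) / 2).
        - unfold Rdiv. rewrite Rinv_mult. 
          replace (k * ((a - k * (N' * (k * b))) * (/ 2 * / (k + 1))))
            with ((a - k * (N' * (k * b))) * / 2 * (k * / (k + 1))) by ring.
          rewrite <- (Rmult_1_r ((a - k * (N' * (k * b))) * / 2)) at 2.
          apply Rmult_le_compat_l. lra.
          apply Rmult_le_reg_r with (k + 1). lra.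
          rewrite Rmult_assoc, Rinv_l; lra.
        - lra. }
      lra.
Qed.
Fixpoint seqc {X : Type} (x0 : X) (P : X -> R -> X -> Prop) (c b0 : R) (n : nat) : X :=
  match n with
  | O => x0
  | Datatypes.S m => epsilon (inhabits x0) (P (seqc x0 P c b0 m) (b0 * c ^ m))
  end.

Lemma geo_small c B eps : 0 <= c < 1 -> 0 <= B -> 0 < eps -> exists N, forall n, (n >= N)%nat -> B * c ^ n < eps.
Proof.
  intros Hc HB He.
  destruct (pow_lt_1_zero c (ltac:(rewrite Rabs_pos_eq; lra)) (eps / (B + 1)) (ltac:(apply Rdiv_lt_0_compat; lra)))
    as [N HN].
  exists N. intros n Hn. specialize (HN n Hn).
  assert (Hp : 0 <= c ^ n) by (apply pow_le; lra).
  rewrite Rabs_pos_eq in HN by auto.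
  apply Rle_lt_trans with ((B + 1) * c ^ n). nra.
  apply Rmult_lt_reg_l with (/ (B + 1)). apply Rinv_0_lt_compat; lra.
  rewrite <- Rmult_assoc, Rinv_l, Rmult_1_l by lra. unfold Rdiv in HN. lra.
Qed.

Theorem theorem5p4 (X : Type) (d : X -> X -> R)
  (S : Type) (mul : S -> S -> S) (act : S -> X -> X) (k : R) :
  is_metric d -> complete_metric d ->
  uniform_normal_structure d -> property_P_nets d ->
  is_semigroup mul -> is_action mul act -> sg_le_total mul ->
  strong_orbit_lipschitz act d k ->
  Rbar_lt (Finite k) (inv_sqrt_Rbar (Ntilde d)) ->
  (exists x, bounded_set d (orbit act x)) ->
  exists z, forall s, act s z = z.
Proof.
  intros Hm Hcomp Hu HP Hsg Hact Htot Hlip Hk [x0 [c0 [r0 Hb0]]].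
  destruct (classic (inhabited S)) as [Hinh | Hninh].
  2:{ exists x0. intros s. exfalso. apply Hninh. constructor. exact s. }
  assert (Hd0 : forall y, d y y = 0) by (intro y; apply (Defs.dist_eq0 d Hm); auto).
  assert (Hdpos : forall x y, 0 <= d x y) by (apply (Defs.dist_ge0 d Hm)).
  set (k' := Rmax k 0).
  assert (Hk'0 : 0 <= k') by apply Rmax_r.
  assert (Hlip' : strong_orbit_lipschitz act d k').
  { intros s x y r H. pose proof (Hlip s x y r H) as H'.
    assert (0 <= r).
    { apply Rle_trans with (d x y). auto. apply (Dist_ge d x (orbit act y) r y H). left; auto. }
    eapply Rbar_le_trans. exact H'. simpl. apply Rmult_le_compat_r; auto. apply Rmax_l. }
  assert (Hk' : Rbar_lt (Finite k') (inv_sqrt_Rbar (Ntilde d))).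
  { unfold k', Rmax. destruct (Rle_dec k 0); auto.
    unfold uniform_normal_structure in Hu. destruct (Ntilde d) as [t| |]; simpl in *; try contradiction; auto.
    destruct (Rlt_dec 0 t); simpl; auto. apply Rinv_0_lt_compat. apply sqrt_lt_R0; auto. }
  destruct (getN0 (Ntilde d) k' Hu Hk' Hk'0) as [N0 [HN0 [HN HkN]]].
  set (N' := N0 + (1 - k' * k' * N0) / (2 * (k' * k' + 1))).
  assert (Hq : 0 < (1 - k' * k' * N0) / (2 * (k' * k' + 1))) by (apply Rdiv_lt_0_compat; nra).
  assert (HN' : N0 < N') by (unfold N'; lra).
  set (c := k' * k' * N').
  assert (Hc : 0 <= c < 1).
  { unfold c, N'. split. apply Rmult_le_pos. nra. lra.
    set (e := 1 - k' * k' * N0).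
    assert (Hk2 : 0 <= k' * k') by nra.
    assert (k' * k' * (e / (2 * (k' * k' + 1))) < e).
    { apply Rmult_lt_reg_r with (2 * (k' * k' + 1)). nra.
      unfold Rdiv. replace (k' * k' * (e * / (2 * (k' * k' + 1))) * (2 * (k' * k' + 1)))
        with (k' * k' * e * (/ (2 * (k' * k' + 1)) * (2 * (k' * k' + 1)))) by ring.
      rewrite Rinv_l by nra. unfold e in *. nra. }
    unfold e in *. nra. }
  assert (Hr0 : 0 <= r0) by (apply Rle_trans with (d c0 x0); auto; apply Hb0; left; auto).
  set (b0 := 2 * r0).
  assert (Hx0 : forall t, d x0 (act t x0) <= b0).
  { intro t. apply Rle_trans with (d x0 c0 + d c0 (act t x0)). apply (Defs.dist_tri d Hm).
    rewrite (Defs.dist_sym d Hm). unfold b0.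
    assert (d c0 x0 <= r0) by (apply Hb0; left; auto).
    assert (d c0 (act t x0) <= r0) by (apply Hb0; right; exists t; auto). lra. }
  set (P := fun (x : X) (b : R) (x' : X) => d x x' <= b /\ forall t, d x' (act t x') <= c * b).
  set (u := seqc x0 P c b0).
  assert (Hb0p : 0 <= b0) by (unfold b0; lra).
  assert (Hinv : forall n, forall t, d (u n) (act t (u n)) <= b0 * c ^ n).
  { induction n as [|n IH].
    - simpl. rewrite Rmult_1_r. auto.
    - intro t. change (u (Datatypes.S n)) with (epsilon (inhabits x0) (P (u n) (b0 * c ^ n))).
      assert (HP' : P (u n) (b0 * c ^ n) (epsilon (inhabits x0) (P (u n) (b0 * c ^ n)))).
      { apply epsilon_spec.
        assert (Hbp : 0 <= b0 * c ^ n) by (apply Rmult_le_pos; auto; apply pow_le; lra).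
        destruct (step d mul act k' N0 N' (u n) (b0 * c ^ n) Hm HP Hsg Hact Htot Hlip' Hk'0 HN HN0 HN' Hinh Hbp IH)
          as [x' [H1 H2]].
        exists x'. split; auto. intro t'. eapply Rle_trans; [exact (H2 t') | right; unfold c; ring]. }
      destruct HP' as [_ H2]. specialize (H2 t). simpl. 
      replace (b0 * (c * c ^ n)) with (c * (b0 * c ^ n)) by ring. exact H2. }
  assert (Hnext : forall n, d (u n) (u (Datatypes.S n)) <= b0 * c ^ n).
  { intro n. change (u (Datatypes.S n)) with (epsilon (inhabits x0) (P (u n) (b0 * c ^ n))).
    assert (HP' : P (u n) (b0 * c ^ n) (epsilon (inhabits x0) (P (u n) (b0 * c ^ n)))).
    { apply epsilon_spec.
      assert (Hbp : 0 <= b0 * c ^ n) by (apply Rmult_le_pos; auto; apply pow_le; lra).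
      destruct (step d mul act k' N0 N' (u n) (b0 * c ^ n) Hm HP Hsg Hact Htot Hlip' Hk'0 HN HN0 HN' Hinh Hbp (Hinv n))
        as [x' [H1 H2]].
      exists x'. split; auto. intro t'. eapply Rle_trans; [exact (H2 t') | right; unfold c; ring]. }
    exact (proj1 HP'). }
  assert (Hgeo : forall m p, d (u m) (u (m + p)%nat) <= b0 * (c ^ m - c ^ (m + p)) / (1 - c)).
  { intros m p. induction p as [|p IH].
    - rewrite Nat.add_0_r, Hd0. unfold Rdiv. rewrite Rminus_diag, Rmult_0_r, Rmult_0_l. lra.
    - apply Rle_trans with (d (u m) (u (m + p)%nat) + d (u (m + p)%nat) (u (m + Datatypes.S p)%nat)).
      apply (Defs.dist_tri d Hm).
      rewrite Nat.add_succ_r. specialize (Hnext (m + p)%nat).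
      apply Rle_trans with (b0 * (c ^ m - c ^ (m + p)) / (1 - c) + b0 * c ^ (m + p)). lra.
      right. simpl. field. lra. }
  assert (Hgeo2 : forall m n, (m <= n)%nat -> d (u m) (u n) <= (b0 / (1 - c)) * c ^ m).
  { intros m n Hmn. replace n with (m + (n - m))%nat by lia.
    eapply Rle_trans. apply Hgeo.
    assert (Hx : 0 <= c ^ (m + (n - m))) by (apply pow_le; lra).
    assert (HB : 0 <= b0 / (1 - c)) by (unfold Rdiv; apply Rmult_le_pos; [lra | apply Rlt_le, Rinv_0_lt_compat; lra]).
    assert (Heq : b0 * (c ^ m - c ^ (m + (n - m))) / (1 - c)
                 = b0 / (1 - c) * c ^ m - b0 / (1 - c) * c ^ (m + (n - m))) by (field; lra).
    rewrite Heq. assert (0 <= b0 / (1 - c) * c ^ (m + (n - m))) by (apply Rmult_le_pos; auto). lra. }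
  assert (HB : 0 <= b0 / (1 - c)) by (unfold Rdiv; apply Rmult_le_pos; [lra | apply Rlt_le, Rinv_0_lt_compat; lra]).
  destruct (Hcomp u) as [z Hz].
  { intros eps He. destruct (geo_small c _ eps Hc HB He) as [N HN2]. exists N.
    intros m n Hm' Hn'. destruct (Nat.le_ge_cases m n) as [Hmn|Hmn].
    - eapply Rle_lt_trans. apply Hgeo2; auto. apply HN2; auto.
    - rewrite (Defs.dist_sym d Hm). eapply Rle_lt_trans. apply Hgeo2; auto. apply HN2; auto. }
  exists z. intros t.
  apply (Defs.dist_eq0 d Hm).
  apply Rle_antisym; [| apply Hdpos].
  apply Rnot_lt_le. intro Hlt.
  set (e := d (act t z) z / (2 * k' + 3)).
  assert (He : 0 < e) by (unfold e; apply Rdiv_lt_0_compat; lra).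
  destruct (Hz e He) as [N1 HN1].
  destruct (geo_small c b0 e Hc Hb0p He) as [N2 HN2].
  set (n := Nat.max N1 N2).
  specialize (HN1 n (Nat.le_max_l _ _)). specialize (HN2 n (Nat.le_max_r _ _)).
  set (bn := b0 * c ^ n) in *.
  assert (Hbn : 0 <= bn) by (unfold bn; apply Rmult_le_pos; auto; apply pow_le; lra).
  assert (HD : Rbar_le (Dist d z (orbit act (u n))) (Finite (d z (u n) + bn))).
  { apply Dist_le. intros y [->|[s ->]]. lra.
    apply Rle_trans with (d z (u n) + d (u n) (act s (u n))). apply (Defs.dist_tri d Hm).
    specialize (Hinv n s). fold bn in Hinv. lra. }
  pose proof (Hlip' t _ _ _ HD) as HD2.
  assert (H1 : d (act t z) (act t (u n)) <= k' * (d z (u n) + bn)).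
  { apply (Dist_ge d _ _ _ _ HD2). left; auto. }
  assert (H2 : d (act t (u n)) (u n) <= bn).
  { rewrite (Defs.dist_sym d Hm). apply Hinv. }
  assert (H3 : d (act t z) z <= d (act t z) (act t (u n)) + d (act t (u n)) (u n) + d (u n) z).
  { eapply Rle_trans. apply (Defs.dist_tri d Hm _ (act t (u n))).
    pose proof (Defs.dist_tri d Hm (act t (u n)) (u n) z). lra. }
  rewrite (Defs.dist_sym d Hm z) in H1.
  assert (Hkk : k' * (d (u n) z + bn) <= k' * (2 * e)) by (apply Rmult_le_compat_l; lra).
  assert (d (act t z) z <= (2 * k' + 2) * e) by nra.
  assert (d (act t z) z = (2 * k' + 3) * e) by (unfold e; field; lra).
  nra.
Qed.
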